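(* Let $(a_1,\rho_1)\in(0,\infty)\times(0,\infty)$ satisfy $h(a_1,\rho_1)\ge0$. Then for every $a_2\in(0,a_1]$ one has $h(a_2,\rho_2)\ge0$ for all $\rho_2\in\big[\frac{a_2}{a_1}\rho_1,\rho_1\big]$.
   Context: Fix $2<q<\frac{10}{3}<p<6$ and $\mu>0$. For $h:\mathbb{R}^2\to\mathbb{R}$ let $D_x^{-1}h(x,y)=\int_{-\infty}^x h(s,y)\,ds$; let $X$ be the Hilbert space obtained as the completion (in the a.e.-limit sense) of $\{g_x:g\in C_0^\infty(\mathbb{R}^2)\}$ under the norm $\big(\int_{\mathbb{R}^2}(|u_x|^2+|D_x^{-1}u_y|^2+u^2)\big)^{1/2}$, and $\|u\|_0^2=\int_{\mathbb{R}^2}(|u_x|^2+|D_x^{-1}u_y|^2)$. Let $S>0$ be a constant with $|u|_6\le S\|u\|_0$ for all $u\in X$; for $r\in[2,6]$ set $\beta_r=\frac32-\frac3r$ and $C_r=S^{r\beta_r}$. Define $h:(0,\infty)\times(0,\infty)\to\mathbb{R}$ by $$h(a,\rho)=\frac12-\frac{\mu}{q}C_q\rho^{q\beta_q-2}a^{(1-\beta_q)q}-\frac1pC_p\rho^{p\beta_p-2}a^{(1-\beta_p)p}.$$ *)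

(* Defs.v *)
From Stdlib Require Import Reals.
Open Scope R_scope.

Definition beta (r : R) : R := 3/2 - 3/r.

Definition Cr (S r : R) : R := Rpower S (r * beta r).

Definition h (S mu p q : R) (a rho : R) : R :=
  1/2
  - mu / q * Cr S q * Rpower rho (q * beta q - 2) * Rpower a ((1 - beta q) * q)
  - 1 / p * Cr S p * Rpower rho (p * beta p - 2) * Rpower a ((1 - beta p) * p).

(* Main.v *)
Require Import Defs.
From Stdlib Require Import Reals Lra Psatz.
Open Scope R_scope.

Lemma myln_le x y : 0 < x -> x <= y -> ln x <= ln y.
Proof. intros Hx [H|H]; [left; apply ln_increasing; auto| subst; right; reflexivity]. Qed.

Lemma key (e1 e2 a1 a2 r1 r2 : R) :
  0 < a2 -> a2 <= a1 -> 0 < r1 -> a2 / a1 * r1 <= r2 <= r1 ->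
  0 <= e2 -> (0 <= e1 \/ 0 <= e1 + e2) ->
  Rpower r2 e1 * Rpower a2 e2 <= Rpower r1 e1 * Rpower a1 e2.
Proof.
  intros Ha2 Ha Hr1 [Hr2 Hr2'] He2 He.
  assert (Ha1 : 0 < a1) by lra.
  assert (Hq : 0 < a2 / a1 * r1) by (apply Rmult_lt_0_compat; [apply Rdiv_lt_0_compat|]; lra).
  assert (Hr2p : 0 < r2) by lra.
  unfold Rpower. rewrite <- !exp_plus.
  match goal with |- exp ?x <= exp ?y => assert (HH: x <= y); [|destruct (Rle_lt_or_eq_dec _ _ HH) as [Hl|Hl]; [left; apply exp_increasing; exact Hl| rewrite Hl; right; reflexivity]] end.
  assert (L1 : ln a2 <= ln a1) by (apply myln_le; lra).
  assert (L2 : ln r2 <= ln r1) by (apply myln_le; lra).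
  assert (L3 : ln (a2 / a1 * r1) <= ln r2) by (apply myln_le; lra).
  rewrite ln_mult in L3 by (try apply Rdiv_lt_0_compat; lra).
  unfold Rdiv in L3. rewrite ln_mult in L3 by (try apply Rinv_0_lt_compat; lra).
  rewrite ln_Rinv in L3 by lra.
  destruct He as [He|He]; nra.
Qed.

Theorem lemma5p2 (S mu p q : R) :
  2 < q -> q < 10/3 -> 10/3 < p -> p < 6 -> 0 < mu -> 0 < S ->
  forall a1 rho1 : R, 0 < a1 -> 0 < rho1 ->
  0 <= h S mu p q a1 rho1 ->
  forall a2 : R, 0 < a2 -> a2 <= a1 ->
  forall rho2 : R, a2 / a1 * rho1 <= rho2 <= rho1 ->
  0 <= h S mu p q a2 rho2.
Proof.
  intros Hq1 Hq2 Hp1 Hp2 Hmu HS a1 rho1 Ha1 Hr1 H a2 Ha2 Ha rho2 Hr.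
  unfold h in *.
  assert (Kq : Rpower rho2 (q * beta q - 2) * Rpower a2 ((1 - beta q) * q)
     <= Rpower rho1 (q * beta q - 2) * Rpower a1 ((1 - beta q) * q)).
  { apply key; auto; unfold beta.
    - replace ((1 - (3 / 2 - 3 / q)) * q) with (3 - q/2) by (field; lra). lra.
    - right. replace (q * (3 / 2 - 3 / q) - 2 + (1 - (3 / 2 - 3 / q)) * q) with (q - 2) by (field; lra). lra. }
  assert (Kp : Rpower rho2 (p * beta p - 2) * Rpower a2 ((1 - beta p) * p)
     <= Rpower rho1 (p * beta p - 2) * Rpower a1 ((1 - beta p) * p)).
  { apply key; auto; unfold beta.
    - replace ((1 - (3 / 2 - 3 / p)) * p) with (3 - p/2) by (field; lra). lra.
    - left. replace (p * (3 / 2 - 3 / p) - 2) with (3*p/2 - 5) by (field; lra). lra. }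
  assert (Cq : 0 <= mu / q * Cr S q).
  { unfold Cr, Rpower. apply Rmult_le_pos; [apply Rlt_le, Rdiv_lt_0_compat; lra|apply Rlt_le, exp_pos]. }
  assert (Cp : 0 <= 1 / p * Cr S p).
  { unfold Cr, Rpower. apply Rmult_le_pos; [apply Rlt_le, Rdiv_lt_0_compat; lra|apply Rlt_le, exp_pos]. }
  rewrite !(Rmult_assoc (_ * Cr S _)) in *.
  apply Rmult_le_compat_l with (r := mu / q * Cr S q) in Kq; auto.
  apply Rmult_le_compat_l with (r := 1 / p * Cr S p) in Kp; auto.
  lra.
Qed.
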